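(* Let $R$ be a commutative Noetherian ring with unity such that $\Gamma_E(R)$ is finite and has more than two vertices. Then $\Gamma_E(R)$ is not a regular graph.
   Context: For $x,y\in R$ write $x\sim y$ iff $\operatorname{ann}(x)=\operatorname{ann}(y)$; $[x]$ denotes the equivalence class of $x$. Let $Z^*(R)$ be the set of nonzero zero divisors of $R$. The graph $\Gamma_E(R)$ is the simple graph whose vertices are the classes $[x]$ with $x\in Z^*(R)$, two distinct vertices $[x],[y]$ being adjacent iff $xy=0$. A graph is regular if all its vertices have the same degree. *)

(* Defs.v *)
From HB Require Import structures.
From mathcomp Require Import all_boot all_order all_algebra.
From mathcomp Require Import boolp classical_sets cardinality.
From mathcomp Require Import finmap.
Set Implicit Arguments. Unset Strict Implicit. Unset Printing Implicit Defensive.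
Import GRing.Theory.
Local Open Scope ring_scope.
Local Open Scope classical_set_scope.

Section ZeroDivisorGraph.
Variable R : comPzRingType.

Definition is_ideal (I : set R) : Prop :=
  I 0 /\ (forall x y, I x -> I y -> I (x - y)) /\ (forall r x, I x -> I (r * x)).

Definition noetherian : Prop :=
  forall I : nat -> set R, (forall n, is_ideal (I n)) ->
    (forall n, I n `<=` I n.+1) ->
    exists N : nat, forall n, (N <= n)%N -> I n = I N.

Definition ann (x : R) : set R := [set y | x * y = 0].

Definition zdivs : set R := [set x | x != 0 /\ exists y, y != 0 /\ x * y = 0].

Definition eclass (x : R) : set R := [set y | ann y = ann x].

Definition GE_vertices : set (set R) := eclass @` zdivs.

Definition GE_adj (U V : set R) : Prop :=
  U <> V /\ exists x y, zdivs x /\ zdivs y /\ U = eclass x /\ V = eclass y /\ x * y = 0.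

Definition GE_nbhd (U : set R) : set (set R) := [set V | GE_vertices V /\ GE_adj U V].

(* degree of a vertex (meaningful when the graph is finite) *)
Definition GE_degree (U : set R) : nat := #|` fset_set (GE_nbhd U)|%fset.

Definition GE_regular : Prop :=
  forall U V, GE_vertices U -> GE_vertices V -> GE_degree U = GE_degree V.

End ZeroDivisorGraph.
Arguments noetherian R : clear implicits.
Arguments zdivs R : clear implicits.
Arguments GE_vertices R : clear implicits.
Arguments GE_regular R : clear implicits.

(* Main.v *)
Require Import Defs.
From mathcomp Require Import all_boot all_order all_algebra.
From mathcomp Require Import boolp classical_sets cardinality finmap.
Set Implicit Arguments. Unset Strict Implicit. Unset Printing Implicit Defensive.
Import GRing.Theory.
Local Open Scope ring_scope.
Local Open Scope classical_set_scope.

Section Aux.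
Variable R : comPzRingType.
Implicit Types a b c x y z w u : R.

Lemma annE x y : ann x y <-> x * y = 0. Proof. by []. Qed.

Lemma eclass_eq x y : eclass x = eclass y <-> ann x = ann y.
Proof.
split=> [E|E].
  have : eclass x x by [].
  by rewrite E /eclass /=.
by rewrite /eclass E.
Qed.

Lemma zdivsP x : zdivs R x <-> x != 0 /\ exists y, y != 0 /\ x * y = 0.
Proof. by []. Qed.

Lemma zdiv_of x y : x != 0 -> y != 0 -> x * y = 0 -> zdivs R x.
Proof. by move=> hx hy e; split => //; exists y. Qed.

Lemma adj_mul a c : GE_adj (eclass a) (eclass c) -> a * c = 0.
Proof.
case=> _ [x [y [_ [_ [ex [ey exy]]]]]].
move/eclass_eq: ex => ex; move/eclass_eq: ey => ey.
have h1 : ann x y by [].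
rewrite -ex in h1.
have h2 : ann y a by rewrite /ann /= mulrC.
by rewrite -ey /ann /= mulrC in h2.
Qed.

Lemma mul_adj a c : zdivs R a -> zdivs R c -> ann a <> ann c -> a * c = 0 ->
  GE_adj (eclass a) (eclass c).
Proof.
move=> za zc ne e; split; first by move/eclass_eq.
by exists a, c.
Qed.

Lemma vertexP V : GE_vertices R V <-> exists c, zdivs R c /\ V = eclass c.
Proof.
split; first by case=> c zc <-; exists c.
by case=> c [zc ->]; exists c.
Qed.


Lemma adj_sym (U V : set R) : GE_adj U V -> GE_adj V U.
Proof. by case=> ne [x [y [? [? [? [? e]]]]]]; split; [by move=> /esym|exists y, x; rewrite mulrC]. Qed.

Lemma mono_nbhd (fV : finite_set (GE_vertices R)) (reg : GE_regular R) a b z :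
  zdivs R a -> zdivs R b -> ann a `<=` ann b -> ann a <> ann b ->
  zdivs R z -> ann z <> ann a -> ann z <> ann b -> b * z = 0 -> a * z = 0.
Proof.
move=> za zb sab nab zz nza nzb ebz.
have vA : GE_vertices R (eclass a) by exists a.
have vB : GE_vertices R (eclass b) by exists b.
have vZ : GE_vertices R (eclass z) by exists z.
have fN (U : set R) : finite_set (GE_nbhd U) by apply: (sub_finite_set _ fV) => V [].
set X := fset_set (GE_nbhd (eclass a)); set Y := fset_set (GE_nbhd (eclass b)).
have inX V : (V \in X) = (V \in GE_nbhd (eclass a)) by rewrite in_fset_set.
have inY V : (V \in Y) = (V \in GE_nbhd (eclass b)) by rewrite in_fset_set.
have cXY : #|` X| = #|` Y| := reg _ _ vA vB.
have sub : (X `\ eclass b `<=` Y `\ eclass a)%fset.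
  apply/fsubsetP => V; rewrite !in_fsetD1 inX inY => /andP[VB /set_mem [vV adj]].
  have [v [zv EV]] := (vertexP V).1 vV; subst V.
  have eav := adj_mul adj.
  apply/andP; split.
    apply/negP => /eqP E; case: adj => + _; by rewrite E.
  apply: mem_set; split => //; apply: mul_adj => //.
    by move=> E; move/eqP: VB; apply; apply/eclass_eq; rewrite E.
  by have := sab v eav.
have eqB : (eclass b \in X) = (eclass a \in Y).
  rewrite inX inY; apply/idP/idP => /set_mem [_ adj]; apply: mem_set; split => //;
  exact: adj_sym.
have cD : #|` (X `\ eclass b)%fset| = #|` (Y `\ eclass a)%fset|.
  by move: cXY; rewrite (cardfsD1 (eclass b) X) (cardfsD1 (eclass a) Y) eqB => /addnI.
have := (fsubset_leqif_cards sub).2; rewrite cD eqxx => /esym/eqP EXY.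
have : eclass z \in (Y `\ eclass a)%fset.
  rewrite in_fsetD1 inY; apply/andP; split.
    by apply/negP => /eqP /eclass_eq.
  apply: mem_set; split => //; apply: mul_adj => //.
  by move=> E; apply: nzb.
rewrite -EXY in_fsetD1 inX => /andP[_ /set_mem [_ adj]].
exact: adj_mul adj.
Qed.


Definition maxl x := zdivs R x /\ forall z, zdivs R z -> ann x `<=` ann z -> ann z = ann x.

Definition up x := [set V : set R | exists y, zdivs R y /\ V = eclass y /\
  ann x `<=` ann y /\ ann x <> ann y].

Lemma exists_max (fV : finite_set (GE_vertices R)) x : zdivs R x ->
  exists y, maxl y /\ ann x `<=` ann y.
Proof.
have fU w : finite_set (up w).
  apply: (sub_finite_set _ fV) => V [y [zy [-> _]]]; by exists y.
have inU w V : (V \in fset_set (up w)) = (V \in up w) by rewrite in_fset_set.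
suff: forall n x, zdivs R x -> (#|` fset_set (up x)| <= n)%N ->
  exists y, maxl y /\ ann x `<=` ann y by move=> H zx; exact: H _ x zx (leqnn _).
elim=> [|n IH] {}x zx hn.
- exists x; split => //; split => // z zz s; apply: contrapT => nz.
  have : eclass z \in fset_set (up x).
    by rewrite inU; apply: mem_set; exists z; split => //; split => //; split => // /esym.
  move=> Hz; move: hn; rewrite leqn0 cardfs_eq0 => /eqP E; by rewrite E in Hz.
- have [H|H] := pselect (forall z, zdivs R z -> ann x `<=` ann z -> ann z = ann x).
    by exists x; split => //; split.
  have [z [zz [s nz]]] : exists z, zdivs R z /\ ann x `<=` ann z /\ ann z <> ann x.
    apply: contrapT => H'; apply: H => z zz s; apply: contrapT => nz; apply: H'; by exists z.
  have [y [my sy]] : exists y, maxl y /\ ann z `<=` ann y.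
    apply: IH => //.
    have ez : eclass z \in fset_set (up x).
      by rewrite inU; apply: mem_set; exists z; split => //; split => //; split => // /esym.
    have sub : (fset_set (up z) `<=` fset_set (up x) `\ eclass z)%fset.
      apply/fsubsetP => V; rewrite in_fsetD1 !inU => /set_mem [y [zy [EV [s1 n1]]]].
      apply/andP; split.
        apply/negP => /eqP; rewrite EV => /eclass_eq E; by apply: n1.
      apply: mem_set; exists y; split => //; split => //; split.
        by move=> t /s /s1.
      move=> E; apply: nz; apply/seteqP; split; [rewrite E; exact: s1|exact: s].
    have := fsubset_leq_card sub; move: hn; rewrite (cardfsD1 (eclass z)) ez.
    rewrite add1n ltnS => h1 h2; exact: leq_trans h2 h1.
  exists y; split => //; by move=> t /s /sy.
Qed.


Lemma ann0 x : ann x 0. Proof. by rewrite /ann /= mulr0. Qed.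

Lemma keyL (fV : finite_set (GE_vertices R)) (reg : GE_regular R) a b :
  zdivs R a -> maxl b -> ann a `<=` ann b -> ann a <> ann b ->
  [/\ (forall z, ann b z -> ~ ann a z -> ann z = ann a), a * b = 0, a * a != 0 &
      (forall u w, ann a u -> ann a w -> u * w = 0)].
Proof.
move=> za [zb mb] sab nab.
have [b0 _] := zb.
have [a0 [w0 [w00 aw0]]] := za.
have step1 z : ann b z -> ~ ann a z -> ann z = ann a \/ ann z = ann b.
  move=> bz naz.
  have z0 : z != 0 by apply/negP => /eqP E; apply: naz; rewrite E; exact: ann0.
  have zz : zdivs R z by apply: (zdiv_of z0 b0); rewrite mulrC.
  apply: contrapT => /not_orP [n1 n2]; apply: naz.
  exact: (mono_nbhd fV reg za zb sab nab zz n1 n2 bz).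
have [z0 [bz0 naz0]] : exists z0, ann b z0 /\ ~ ann a z0.
  apply: contrapT => H; apply: nab; apply/seteqP; split => // t bt.
  by apply: contrapT => nat; apply: H; exists t.
have allA z : ann b z -> ~ ann a z -> ann z = ann a.
  move=> bz naz; case: (step1 z bz naz) => // Ezb.
  have zaN : z * a <> 0 by move=> E; apply: naz; rewrite /ann /= mulrC.
  have abN : a * b <> 0.
    move=> E; apply: zaN.
    have : ann b a by rewrite /ann /= mulrC.
    by rewrite -Ezb.
  have bw : ann b w0 by exact: sab.
  have bzw : ann b (z + w0) by rewrite /ann /= mulrDr bz bw addr0.
  have nazw : ~ ann a (z + w0).
    by rewrite /ann /= mulrDr aw0 addr0; exact: naz.
  case: (step1 _ bzw nazw) => E.
  - apply: False_ind; apply: abN.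
    have : ann (z + w0) b by rewrite /ann /= mulrC; exact: bzw.
    by rewrite E.
  - have zw : zdivs R w0 by apply: (zdiv_of w00 a0); rewrite mulrC.
    have sw : ann b `<=` ann w0.
      move=> t bt.
      have h1 : ann (z + w0) t by rewrite E.
      have h2 : ann z t by rewrite Ezb.
      by move: h1; rewrite /ann /= mulrDl h2 add0r.
    have Ew := mb _ zw sw.
    apply: False_ind; apply: abN.
    have : ann w0 a by rewrite /ann /= mulrC.
    by rewrite Ew /ann /= mulrC.
have Ez0 := allA _ bz0 naz0.
split => //.
- have : ann z0 b by rewrite /ann /= mulrC.
  by rewrite Ez0.
- apply/eqP => E; apply: naz0.
  have h : ann z0 a by rewrite Ez0.
  by move: h; rewrite /ann /= mulrC.
- move=> u w au aw.
  have bzw : ann b (z0 + w) by rewrite /ann /= mulrDr bz0 (sab _ aw) addr0.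
  have nazw : ~ ann a (z0 + w).
    by rewrite /ann /= mulrDr aw addr0; exact: naz0.
  have E := allA _ bzw nazw.
  have h1 : ann (z0 + w) u by rewrite E.
  have h2 : ann z0 u by rewrite Ez0.
  by move: h1; rewrite /ann /= mulrDl h2 add0r mulrC.
Qed.


Lemma three_reps (fV : finite_set (GE_vertices R)) :
  (2 < #|` fset_set (GE_vertices R)|)%N ->
  exists a1 a2 a3, [/\ zdivs R a1, zdivs R a2 & zdivs R a3] /\
    [/\ ann a1 <> ann a2, ann a1 <> ann a3 & ann a2 <> ann a3].
Proof.
set S := fset_set (GE_vertices R) => hS.
have inS V : (V \in S) = (V \in GE_vertices R) by rewrite in_fset_set.
have [X XS] : exists X, X \in S.
  by apply/fset0Pn; rewrite -cardfs_gt0; apply: leq_trans hS.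
have h1 : (1 < #|` (S `\ X)%fset|)%N by move: hS; rewrite (cardfsD1 X) XS.
have [Y YS] : exists Y, Y \in (S `\ X)%fset.
  by apply/fset0Pn; rewrite -cardfs_gt0; apply: leq_trans h1.
have h2 : (0 < #|` (S `\ X `\ Y)%fset|)%N by move: h1; rewrite (cardfsD1 Y) YS.
have [Z ZS] : exists Z, Z \in (S `\ X `\ Y)%fset by apply/fset0Pn; rewrite -cardfs_gt0.
move: ZS YS; rewrite !in_fsetD1 => /and3P [ZY ZX ZS] /andP [YX YS].
move: XS YS ZS; rewrite !inS => /set_mem [a1 z1 E1] /set_mem [a2 z2 E2] /set_mem [a3 z3 E3].
subst X Y Z.
exists a1, a2, a3; split; split => // E.
- by move: YX; rewrite (eclass_eq a2 a1).2 ?eqxx.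
- by move: ZX; rewrite (eclass_eq a3 a1).2 ?eqxx.
- by move: ZY; rewrite (eclass_eq a3 a2).2 ?eqxx.
Qed.


Lemma ann_opp x : ann (- x) = ann x.
Proof. apply/seteqP; split => t; rewrite /ann /= mulNr => h; first by rewrite -[x * t]opprK h oppr0.
by rewrite h oppr0. Qed.

Lemma antichain_case a1 a2 a3 :
  (forall x y, zdivs R x -> zdivs R y -> ann x `<=` ann y -> ann x = ann y) ->
  [/\ zdivs R a1, zdivs R a2 & zdivs R a3] ->
  [/\ ann a1 <> ann a2, ann a1 <> ann a3 & ann a2 <> ann a3] -> False.
Proof.
move=> H [z1 z2 z3] [n12 n13 n23].
have P x y : zdivs R x -> zdivs R y -> ann x <> ann y -> x * y = 0.
  move=> zx zy nxy; apply: contrapT => nz.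
  have [x0 [t [t0 xt]]] := zx.
  have zxy : zdivs R (x * y).
    by split; [apply/eqP|exists t; split => //; rewrite mulrAC xt mul0r].
  have E1 : ann x = ann (x * y).
    by apply: H => // s; rewrite /ann /= => xs; rewrite mulrAC xs mul0r.
  have E2 : ann y = ann (x * y).
    by apply: H => // s; rewrite /ann /= => ys; rewrite -mulrA ys mulr0.
  by apply: nxy; rewrite E1 E2.
have sq x y k : zdivs R x -> zdivs R y -> zdivs R k -> ann x <> ann y ->
    ann x <> ann k -> ann y <> ann k -> x * x = 0 \/ y * y = 0.
  move=> zx zy zk nxy nxk nyk.
  have [k0 _] := zk.
  have s0 : x + y != 0.
    apply/eqP => E; apply: nxy; rewrite -(ann_opp y); congr ann.
    by apply/eqP; rewrite -addr_eq0 E.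
  have zs : zdivs R (x + y).
    split => //; exists k; split => //.
    by rewrite mulrDl (P _ _ zx zk nxk) (P _ _ zy zk nyk) addr0.
  have [Ex|Nx] := pselect (ann (x + y) = ann x).
  - right; have : (x + y) * y = 0 by apply: P => //; rewrite Ex.
    by rewrite mulrDl (P _ _ zx zy nxy) add0r.
  - left; have : (x + y) * x = 0 by apply: P.
    by rewrite mulrDl (P _ _ zy zx (fun e => nxy (esym e))) addr0.
have sub x y : zdivs R x -> zdivs R y -> x * x = 0 -> ann y `<=` ann x.
  move=> zx zy xx t; rewrite /ann /= => yt.
  have [y0 _] := zy.
  have [->|t0] := eqVneq t 0; first by rewrite mulr0.
  have zt : zdivs R t by apply: (zdiv_of t0 y0); rewrite mulrC.
  have [Et|Nt] := pselect (ann t = ann x).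
  - have : ann t x by rewrite Et.
    by rewrite /ann /= mulrC.
  - by rewrite mulrC; apply: P.
have two x y : zdivs R x -> zdivs R y -> ann x <> ann y -> x * x = 0 -> y * y = 0 -> False.
  move=> zx zy nxy xx yy; apply: nxy; apply/seteqP; split; exact: sub.
have ne x y : ann x <> ann y -> ann y <> ann x by move=> h e; apply: h.
case: (sq _ _ _ z1 z2 z3 n12 n13 n23) => h12;
case: (sq _ _ _ z1 z3 z2 n13 n12 (ne _ _ n23)) => h13;
case: (sq _ _ _ z2 z3 z1 n23 (ne _ _ n12) (ne _ _ n13)) => h23;
 by [ apply: (two _ _ z1 z2 n12) | apply: (two _ _ z1 z3 n13)
    | apply: (two _ _ z2 z3 n23)].
Qed.


Lemma strict_case (fV : finite_set (GE_vertices R)) (reg : GE_regular R) a b c :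
  zdivs R a -> maxl b -> ann a `<=` ann b -> ann a <> ann b ->
  zdivs R c -> ann c <> ann a -> ann c <> ann b -> False.
Proof.
move=> za mb sab nab zc nca ncb.
have [allA ab aa II] := keyL fV reg za mb sab nab.
have [zb mmb] := mb.
have [b0 _] := zb.
have C1 w : zdivs R w -> a * w = 0 -> ann w = ann b.
  move=> zw aw.
  have sIw : ann a `<=` ann w by move=> t ta; exact: II w t aw ta.
  have wa : ann w a by rewrite /ann /= mulrC.
  have [y [my swy]] := exists_max fV zw.
  have say : ann a `<=` ann y by move=> t /sIw /swy.
  have nay : ann a <> ann y.
    move=> E; move/eqP: aa; apply; have : ann y a by exact: swy.
    by rewrite -E.
  have [allA' _ _ _] := keyL fV reg za my say nay.
  have syb : ann y `<=` ann b.
    move=> t yt; have [ta|nta] := pselect (ann a t); first exact: sab.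
    have Et := allA' t yt nta.
    have : ann t b by rewrite Et.
    by rewrite /ann /= mulrC.
  have Eyb := (my.2 _ zb syb).
  have swb : ann w `<=` ann b by rewrite Eyb.
  apply: contrapT => nwb.
  have [_ _ _ II'] := keyL fV reg zw mb swb nwb.
  by move/eqP: aa; apply; apply: II'.
have C2 d : zdivs R d -> ann b d -> ann d = ann a \/ ann d = ann b.
  move=> zd bd; have [ad|nad] := pselect (ann a d).
  - by right; apply: C1.
  - by left; apply: allA.
have [c0 [d [d0 cd]]] := zc.
have bb : b * b = 0 by apply: II.
have cbN : c * b <> 0.
  move=> E; have : ann b c by rewrite /ann /= mulrC.
  by move=> bc; case: (C2 _ zc bc).
have zcb : zdivs R (c * b).
  by split; [apply/eqP|exists b; split => //; rewrite -mulrA bb mulr0].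
have scb : ann b `<=` ann (c * b).
  by move=> t; rewrite /ann /= => bt; rewrite -mulrA bt mulr0.
have Ecb := mmb _ zcb scb.
have bd : ann b d.
  have : ann (c * b) d by rewrite /ann /= mulrAC cd mul0r.
  by rewrite Ecb.
have zd : zdivs R d by apply: (zdiv_of d0 c0); rewrite mulrC.
have dc : ann d c by rewrite /ann /= mulrC.
case: (C2 _ zd bd) => E; rewrite E in dc.
- by apply: cbN; move: (sab _ dc); rewrite /ann /= mulrC.
- by apply: cbN; move: dc; rewrite /ann /= mulrC.
Qed.

End Aux.

Theorem proposition1p10 (R : comPzRingType) :
  noetherian R ->
  finite_set (GE_vertices R) ->
  (2 < #|` fset_set (GE_vertices R)|%fset)%N ->
  ~ GE_regular R.
Proof.
move=> _ fV h3 reg.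
have [a1 [a2 [a3 [[z1 z2 z3] [n12 n13 n23]]]]] := three_reps fV h3.
have [H|H] := pselect (exists x y, [/\ zdivs R x, zdivs R y, ann x `<=` ann y & ann x <> ann y]).
- have [x [y [zx zy sxy nxy]]] := H.
  have [b [mb syb]] := exists_max fV zy.
  have sxb : ann x `<=` ann b by move=> t /sxy /syb.
  have nxb : ann x <> ann b.
    move=> E; apply: nxy; apply/seteqP; split => //; by rewrite E.
  have ne u v : ann u <> ann v -> ann v <> ann u by move=> h e; apply: h.
  have SC := strict_case fV reg zx mb sxb nxb.
  have [E1|N1] := pselect (ann a1 = ann x).
  + have [E2|N2] := pselect (ann a2 = ann x).
      by apply: n12; rewrite E1 E2.
    have [E2'|N2'] := pselect (ann a2 = ann b).
    * apply: (SC _ z3).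
      -- by move=> E; apply: n13; rewrite E1 E.
      -- by move=> E; apply: n23; rewrite E2' E.
    * exact: (SC _ z2 N2 N2').
  + have [E1'|N1'] := pselect (ann a1 = ann b).
    * have [E2|N2] := pselect (ann a2 = ann x).
      -- apply: (SC _ z3).
         ++ by move=> E; apply: n23; rewrite E2 E.
         ++ by move=> E; apply: n13; rewrite E1' E.
      -- apply: (SC _ z2 N2).
         by move=> E; apply: n12; rewrite E1' E.
    * exact: (SC _ z1 N1 N1').
- apply: (antichain_case _ (And3 z1 z2 z3) (And3 n12 n13 n23)).
  move=> x y zx zy sxy; apply: contrapT => nxy; apply: H; by exists x, y.
Qed.
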